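(* Let $X$ and $Y$ be CW complexes and $k\ge 0$. Then the map $$\hat p_k:\hat G_k(X\times Y)=\bigcup_{i+j=k}G_iX\times G_jY\longrightarrow X\times Y,$$ given on $G_iX\times G_jY$ by $p_i^X\times p_j^Y$, is a Serre fibration.
   Context: For a path-connected space $X$, $p_0^X:G_0X\to X$ is the fibration obtained by converting the inclusion of a base point into a fibration (the path fibration). For fibrations $f_l:X_l\to B$, the fiberwise join $X_0*_B\cdots*_BX_n$ is the subspace of the join $X_0*\cdots*X_n$ consisting of formal combinations $t_0x_0+\cdots+t_nx_n$ ($t_l\ge0$, $\sum t_l=1$, terms with $t_l=0$ dropped) with all $f_l(x_l)$ equal, mapping to this common point. The $n$-th Ganea space $G_nX$ is the fiberwise join of $n+1$ copies of $G_0X$ over $X$, and $p_n^X:G_nX\to X$ is the $n$-th Ganea fibration; there are natural inclusions $G_0X\subset G_1X\subset\cdots$ with $p_n^X$ the restriction of $p_{n+1}^X$. Thus $\hat G_k(X\times Y)\subset G_kX\times G_kY$. A Serre fibration is a map with the homotopy lifting property for all CW complexes. *)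

(* Defs.v *)
From HB Require Import structures.
From mathcomp Require Import all_boot all_order all_algebra.
From mathcomp Require Import all_classical all_reals topology normedtype.
From mathcomp Require Import Rstruct Rstruct_topology.

Set Implicit Arguments.
Unset Strict Implicit.
Unset Printing Implicit Defensive.

Import Order.TTheory GRing.Theory Num.Theory.
Local Open Scope classical_set_scope.
Local Open Scope ring_scope.

Definition RR : realType := Rdefinitions.R.

Definition unit_itv : set RR := [set t | 0 <= t <= 1].

(* [set_type A] carries the genuine subspace topology (initial topology of
   the inclusion), see subtype_topology.v *)
Definition I01 : topologicalType := set_type unit_itv.

Lemma unit_itv0 : (0 : RR) \in unit_itv.
Proof. by apply/mem_set; rewrite /unit_itv /= lexx ler01. Qed.

Lemma unit_itv1 : (1 : RR) \in unit_itv.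
Proof. by apply/mem_set; rewrite /unit_itv /= lexx ler01. Qed.

Definition i0 : I01 := exist _ (0 : RR) unit_itv0.
Definition i1 : I01 := exist _ (1 : RR) unit_itv1.

Definition path_connected_space (X : topologicalType) : Prop :=
  forall x y : X, exists g : I01 -> X, [/\ continuous g, g i0 = x & g i1 = y].

(** * Euclidean disks and spheres D^n, int D^n, S^(n-1) in R^n = 'rV_n *)
Definition sqnorm n (v : 'rV[RR]_n) : RR := \sum_(i < n) (v ord0 i) ^+ 2.
Definition disk n : set 'rV[RR]_n := [set v | sqnorm v <= 1].
Definition open_disk n : set 'rV[RR]_n := [set v | sqnorm v < 1].
Definition sphere n : set 'rV[RR]_n := [set v | sqnorm v = 1].
Arguments disk : clear implicits.
Arguments open_disk : clear implicits.
Arguments sphere : clear implicits.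

(** * CW complexes (classical definition via cells and characteristic maps):
    a Hausdorff space X with a family of characteristic maps
    Phi_c : D^(dim c) -> X such that
    - each Phi_c is continuous,
    - the open cells e_c = Phi_c(int D^(dim c)) partition X,
    - Phi_c restricts to a homeomorphism from int D^(dim c) onto e_c,
    - (closure finiteness) Phi_c(S^(dim c - 1)) lies in finitely many cells
      of dimension < dim c,
    - (weak topology) A is closed iff every Phi_c^{-1}(A) is closed in D^(dim c). *)
Definition is_CW_complex (X : topologicalType) : Prop :=
  hausdorff_space X /\
  exists (C : Type) (dim : C -> nat) (Phi : forall c : C, 'rV[RR]_(dim c) -> X),
    let cell c := Phi c @` open_disk (dim c) in
    (forall c, {within disk (dim c), continuous (Phi c)}) /\
    (forall x : X, exists c, cell c x) /\
    (forall c c', c <> c' -> cell c `&` cell c' = set0) /\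
    (forall c (u v : 'rV[RR]_(dim c)),
        open_disk (dim c) u -> open_disk (dim c) v -> Phi c u = Phi c v -> u = v) /\
    (forall c (U : set 'rV[RR]_(dim c)), open U ->
        exists V : set X, open V /\ Phi c @` (U `&` open_disk (dim c)) = V `&` cell c) /\
    (forall c, exists F : set C, [/\ finite_set F,
        (forall c', F c' -> (dim c' < dim c)%N) &
        Phi c @` sphere (dim c) `<=` \bigcup_(c' in F) cell c']) /\
    (forall A : set X,
        closed A <-> forall c, closed (disk (dim c) `&` Phi c @^-1` A)).

Definition homotopy_lifting_wrt (K E B : topologicalType) (p : E -> B) : Prop :=
  forall (H : (K * I01)%type -> B) (f : K -> E),
    continuous H -> continuous f -> (forall k, p (f k) = H (k, i0)) ->
    exists G : (K * I01)%type -> E,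
      [/\ continuous G, (forall z, p (G z) = H z) & (forall k, G (k, i0) = f k)].

Definition serre_fibration (E B : topologicalType) (p : E -> B) : Prop :=
  continuous p /\
  forall K : topologicalType, is_CW_complex K -> homotopy_lifting_wrt K p.

Definition path_set (X : topologicalType) (x0 : X) : set {compact-open, I01 -> X} :=
  [set w | continuous (w : I01 -> X) /\ (w : I01 -> X) i0 = x0].

Definition G0 (X : topologicalType) (x0 : X) : topologicalType :=
  set_type (path_set x0).

Definition p0 (X : topologicalType) (x0 : X) (w : G0 x0) : X :=
  (set_val w : I01 -> X) i1.

(** * Joins of n+1 copies of a space P.
    A formal combination t_0 x_0 + ... + t_n x_n is encoded as a pair
    (t, w) with t : 'I_(n+1) -> R the barycentric coordinates and
    w : 'I_(n+1) -> option P, where w l = None exactly when t_l = 0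
    (the term is dropped).  The join carries Milnor's (strong) topology:
    the coarsest topology making every t_l : join -> [0,1] continuous and
    every x_l : t_l^{-1}(0,1] -> P continuous; it is generated by the
    subbasic sets {z | t_l z \in U} (U open in R) and
    {z | w_l z = Some x, x \in V} (V open in P). *)
Record join_carrier (n : nat) (P : Type) := JoinPt {
  jcoord : 'I_n.+1 -> RR;
  jpoint : 'I_n.+1 -> option P }.

HB.instance Definition _ n P := gen_eqMixin (join_carrier n P).
HB.instance Definition _ n P := gen_choiceMixin (join_carrier n P).

Definition join_subbase_index (n : nat) (P : Type) : pointedType :=
  option ('I_n.+1 * (set RR + set P)).

Definition join_subbase_dom (n : nat) (P : topologicalType) :
    set (join_subbase_index n P) :=
  fun i => match i with
           | None => True
           | Some (_, inl U) => open U
           | Some (_, inr V) => open V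
           end.

Definition join_subbase (n : nat) (P : topologicalType)
    (i : join_subbase_index n P) : set (join_carrier n P) :=
  match i with
  | None => setT
  | Some (l, inl U) => [set z | U (jcoord z l)]
  | Some (l, inr V) => [set z | exists x, jpoint z l = Some x /\ V x]
  end.

HB.instance Definition _ n (P : topologicalType) :=
  isSubBaseTopological.Build (join_carrier n P)
    (@join_subbase_dom n P) (@join_subbase n P).

Definition fjoin_set (n : nat) (P B : Type) (q : P -> B) : set (join_carrier n P) :=
  [set z | [/\ (forall l, 0 <= jcoord z l),
              \sum_(l < n.+1) jcoord z l = 1,
              (forall l, jcoord z l = 0 <-> jpoint z l = None) &
              (forall l l' x x', jpoint z l = Some x -> jpoint z l' = Some x' -> q x = q x')]].

Definition ganea_set (n : nat) (X : topologicalType) (x0 : X) :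
    set (join_carrier n (G0 x0)) :=
  @fjoin_set n _ _ (@p0 X x0).
Arguments ganea_set n {X} x0.

Definition Ganea (n : nat) (X : topologicalType) (x0 : X) : topologicalType :=
  set_type (ganea_set n x0).

(* the common image in X of the points of the combination
   (x0 is only a dummy default: the set below is always a singleton) *)
Definition ganea_proj (n : nat) (X : topologicalType) (x0 : X)
    (z : Ganea n x0) : X :=
  xget x0 [set x | exists l w, jpoint (set_val z) l = Some w /\ p0 w = x].

(** The natural inclusion G_i X \subset G_n X (i <= n) identifies G_i X with
    the combinations whose coordinates t_l vanish for l > i. *)
Definition in_ganea_level (i n : nat) (X : topologicalType) (x0 : X)
    (z : Ganea n x0) : Prop :=
  forall l : 'I_n.+1, (i < l)%N -> jcoord (set_val z) l = 0.

Definition ganea_hat_set (k : nat) (X Y : topologicalType) (x0 : X) (y0 : Y) :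
    set (Ganea k x0 * Ganea k y0)%type :=
  [set ab | exists i j, [/\ (i + j)%N = k, in_ganea_level i ab.1 &
                            in_ganea_level j ab.2]].
Arguments ganea_hat_set k {X Y} x0 y0.

Definition ganea_hat (k : nat) (X Y : topologicalType) (x0 : X) (y0 : Y) :
    topologicalType := set_type (ganea_hat_set k x0 y0).

Definition ganea_hat_proj (k : nat) (X Y : topologicalType) (x0 : X) (y0 : Y)
    (ab : ganea_hat k x0 y0) : (X * Y)%type :=
  (ganea_proj (set_val ab).1, ganea_proj (set_val ab).2).

(* Main.v *)
Require Import Defs.
From HB Require Import structures.
From mathcomp Require Import all_boot all_order all_algebra.
From mathcomp Require Import all_classical all_reals topology normedtype.
From mathcomp Require Import Rstruct Rstruct_topology.
From mathcomp Require Import finmap.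
From mathcomp Require Import ring lra.
Set Implicit Arguments.
Unset Strict Implicit.
Unset Printing Implicit Defensive.
Import Order.TTheory GRing.Theory Num.Theory.
Local Open Scope classical_set_scope.
Local Open Scope ring_scope.


Section SetType.
Context {T : topologicalType} (A : set T).

Lemma val_cont : continuous (set_val : set_type A -> T).
Proof. exact: (@initial_continuous _ T set_val). Qed.

Lemma open_preval (U : set T) : open U -> open (set_val @^-1` U : set (set_type A)).
Proof. by move=> oU; exists U. Qed.

Lemma set_type_cvg_at {Z : topologicalType} (f : Z -> set_type A) (z : Z) :
  {for z, continuous (set_val \o f)} -> {for z, continuous f}.
Proof.
move=> cf U [?/= [[W oW <-]]] /= Wsfz /filterS; apply; apply: cf.
exact: open_nbhs_nbhs.
Qed.
End SetType.

Section JoinTop.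
Context (n : nat) (P : topologicalType).

Lemma join_open_sub (i : join_subbase_index n P) :
  join_subbase_dom i -> open (join_subbase i).
Proof.
move=> Di.
exists [set join_subbase i]; last first.
  by rewrite predeqE => ?; split=> [[_ ->]|] //; exists (join_subbase i).
move=> _ ->; exists [fset i]%fset.
  move=> j; rewrite /= !inE => /eqP ->; exact/mem_set.
by rewrite predeqE=> ?; split=> [|??]; [apply|]; rewrite /= inE // =>/eqP->.
Qed.

Lemma join_cvg (F : set_system (join_carrier n P)) (z : join_carrier n P) :
  Filter F ->
  (forall i, join_subbase_dom i -> join_subbase i z -> F (join_subbase i)) ->
  F --> z.
Proof.
move=> FF cvFt.
move=> A /=; rewrite (@nbhsE (join_carrier n P)).
move=> [_ [[B sB <-] [C BC Ct] sUBA]].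
rewrite nbhs_filterE; apply: filterS sUBA _; apply: (@filterS _ _ _ C).
  by move=> ? ?; exists C.
have /sB [D sD IDeC] := BC; rewrite -IDeC; apply: filter_bigI => E DE.
have /sD /set_mem DE' := DE.
by apply: cvFt => //; move: Ct; rewrite -IDeC => /(_ _ DE).
Qed.
End JoinTop.


Definition cl (r : RR) : RR := if r < 0 then 0 else if 1 < r then 1 else r.

Lemma cl_in (r : RR) : cl r \in unit_itv.
Proof.
apply/mem_set; rewrite /unit_itv /cl /=.
case: ifP => [_|/negbT]; first by rewrite lexx ler01.
rewrite -leNgt => r0; case: ifP => [_|/negbT]; first by rewrite lexx ler01.
by rewrite -leNgt => ->; rewrite r0.
Qed.

Definition clamp (r : RR) : I01 := exist _ (cl r) (cl_in r).

Lemma clamp_val_eq (r : RR) : set_val (clamp r) = cl r.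
Proof. by []. Qed.

Lemma I01_bounds (v : I01) : 0 <= set_val v <= 1.
Proof. case: v => x xin; exact: (set_mem xin). Qed.

Lemma cl_id (r : RR) : 0 <= r <= 1 -> cl r = r.
Proof.
move=> /andP [r0 r1]; rewrite /cl ltNge r0 /= ltNge r1 //.
Qed.

Lemma set_type_eq {T : Type} (A : set T) (u v : set_type A) :
  set_val u = set_val v -> u = v.
Proof. by apply: eq_sig_hprop => x p q; exact: Prop_irrelevance. Qed.

Lemma clamp_val (v : I01) : clamp (set_val v) = v.
Proof.
apply: set_type_eq => /=; apply: cl_id; exact: I01_bounds.
Qed.

Lemma cl_lip (r s : RR) : `|cl r - cl s| <= `|r - s|.
Proof.
have [h|h] := lerP 0 (r - s).
  rewrite [X in _ <= X]ger0_norm // ler_norml /cl.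
  by case: (ltP r 0) => hr; case: (ltP s 0) => hs; case: (ltP 1 r) => hr1;
    case: (ltP 1 s) => hs1; apply/andP; split; lra.
rewrite [X in _ <= X]ltr0_norm // ler_norml /cl.
by case: (ltP r 0) => hr; case: (ltP s 0) => hs; case: (ltP 1 r) => hr1;
  case: (ltP 1 s) => hs1; apply/andP; split; lra.
Qed.

Lemma near_dist (r e : RR) : 0 < e -> \forall t \near r, `|r - t| < e.
Proof.
move=> e0; have H : (fun t : RR => t) @ r --> r by [].
exact: (iffLR (@cvgrPdist_lt _ RR^o _ (nbhs r) _ _ _) H).
Qed.

Lemma cl_cont : continuous cl.
Proof.
move=> r; apply: (iffRL (@cvgrPdist_lt _ RR^o _ (nbhs r) _ _ _)) => e e0; near=> t.
apply: (le_lt_trans (cl_lip _ _)); near: t; exact: near_dist.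
Unshelve. all: by end_near. Qed.

Lemma clamp_cont : continuous clamp.
Proof. by move=> r; apply: set_type_cvg_at; exact: cl_cont. Qed.

Lemma cl_in_seg (v : I01) (c e : RR) :
  `|c - set_val v| <= e -> (clamp @` `[c - e, c + e]) v.
Proof.
move=> h; exists (set_val v); last exact: clamp_val.
rewrite /= in_itv /=; move: h; rewrite ler_norml => /andP [h1 h2].
apply/andP; split; lra.
Qed.

Lemma seg_cl (c e r : RR) : 0 <= c <= 1 -> r \in `[c - e, c + e] -> `|c - cl r| <= e.
Proof.
move=> hc; rewrite in_itv /= => /andP [h1 h2].
rewrite -{1}(cl_id hc); apply: le_trans (cl_lip _ _) _.
rewrite ler_norml; apply/andP; split; lra.
Qed.

Lemma compact_clseg (a b : RR) : compact (clamp @` `[a, b]).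
Proof.
apply: continuous_compact; last exact: segment_compact.
apply: continuous_subspaceT => x; exact: clamp_cont.
Qed.

Lemma eval_at (A X : topologicalType) (phi : A -> {compact-open, I01 -> X})
    (a0 : A) (v0 : I01) :
  {for a0, continuous phi} -> {for v0, continuous (phi a0 : I01 -> X)} ->
  {for (a0, v0), continuous (fun av : A * I01 => (phi av.1 : I01 -> X) av.2)}.
Proof.
move=> cphi cphi0 N; rewrite nbhsE => -[O [oO Ov] ON].
have : nbhs v0 ((phi a0 : I01 -> X) @^-1` O).
  by apply: cphi0; exact: open_nbhs_nbhs.
move=> [_ [[W oW <-] /= Wv WO]].
have : nbhs (set_val v0) W by exact: open_nbhs_nbhs.
move=> /nbhs_ballP [e /= e0 eW].
pose C := clamp @` `[set_val v0 - e / 2, set_val v0 + e / 2].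
have CO : (phi a0 : I01 -> X) @` C `<=` O.
  move=> _ [_ [r rin <-] <-]; apply: WO; apply: eW; rewrite /ball /=.
  apply: le_lt_trans (seg_cl (I01_bounds v0) rin) _; lra.
have oS := @compact_open_open I01 X C O (@compact_clseg (set_val v0 - e / 2) (set_val v0 + e / 2)) oO.
have nS : nbhs a0 (phi @^-1` [set g | (g : I01 -> X) @` C `<=` O]).
  by apply: cphi; apply: open_nbhs_nbhs; split.
have nQ : nbhs v0 [set v : I01 | `|set_val v0 - set_val v| < e / 2].
  have e2 : 0 < e / 2 by rewrite divr_gt0.
  exact: (@val_cont _ unit_itv v0 _ (near_dist (set_val v0) e2)).
exists (phi @^-1` [set g | (g : I01 -> X) @` C `<=` O],
        [set v : I01 | `|set_val v0 - set_val v| < e / 2]) => //.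
move=> [a v] /= [Sa Qv]; apply: ON; apply: Sa; exists v => //.
apply: cl_in_seg; exact: ltW.
Qed.


Lemma curry_at (A X : topologicalType) (F : A * I01 -> X) (a0 : A) :
  (forall v, {for (a0, v), continuous F}) ->
  {for a0, continuous ((fun a v => F (a, v)) : A -> {compact-open, I01 -> X})}.
Proof.
move=> ctsf; apply/compact_open_cvgP => K O /= cptK oO fKO.
near=> z => w /= [+ + <-]; near: z.
move/compact_near_coveringP/near_covering_withinP : cptK; apply.
move=> v Kv; have [[P Q] [Px Qv] PQfO] : nbhs (a0, v) (F @^-1` O).
  by apply: ctsf; move: oO; rewrite openE; apply; apply: fKO; exists v.
by exists (Q, P) => // -[b a] /= [Qb Pa] Kb; exact: PQfO.
Unshelve. all: by end_near. Qed.

Lemma paste_at (Z T : topologicalType) (c : Z -> RR) (g h : Z -> T) (z0 : Z) :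
  {for z0, continuous c} -> {for z0, continuous g} -> {for z0, continuous h} ->
  (c z0 = 1 -> g z0 = h z0) ->
  {for z0, continuous (fun z => if c z <= 1 then g z else h z)}.
Proof.
move=> cc cg ch e N /=.
case: (ltgtP (c z0) 1) => hc.
- move=> Nn; change (\forall z \near z0, N (if c z <= 1 then g z else h z)); near=> z.
  have cz : c z < 1 by near: z; exact: (@cvgr_lt RR _ _ _ c (c z0) cc 1 hc).
  rewrite (ltW cz); near: z; exact: cg.
- move=> Nn; change (\forall z \near z0, N (if c z <= 1 then g z else h z)); near=> z.
  have cz : 1 < c z by near: z; exact: (@cvgr_gt RR _ _ _ c (c z0) cc 1 hc).
  rewrite leNgt cz /=; near: z; exact: ch.
- move=> Nn; have Nh : nbhs (h z0) N by rewrite -(e hc).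
  change (\forall z \near z0, N (if c z <= 1 then g z else h z)); near=> z.
  case: ifP => _; near: z; [exact: cg | exact: ch].
Unshelve. all: by end_near. Qed.


Lemma clamp0 : clamp 0 = i0.
Proof. by apply: set_type_eq; apply: cl_id; rewrite lexx ler01. Qed.

Lemma clamp1 : clamp 1 = i1.
Proof. by apply: set_type_eq; apply: cl_id; rewrite lexx ler01. Qed.

Lemma pair_cont_at (A B C : topologicalType) (f : A -> B) (g : A -> C) (a : A) :
  {for a, continuous f} -> {for a, continuous g} ->
  {for a, continuous (fun x => (f x, g x))}.
Proof.
move=> cf cg; exact: (@cvg_pair _ _ _ (nbhs a) (nbhs (f a)) (nbhs (g a)) _ _ _ f g cf cg).
Qed.

Lemma fst_cont_at (A B : topologicalType) (x : A * B) : {for x, continuous fst}.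
Proof. exact: cvg_fst. Qed.

Lemma snd_cont_at (A B : topologicalType) (x : A * B) : {for x, continuous snd}.
Proof. exact: cvg_snd. Qed.

Section PathLift.
Context (X : topologicalType).

Definition lift_raw (w h : I01 -> X) (s : RR) : I01 -> X :=
  fun u => if set_val u * (1 + s) <= 1 then w (clamp (set_val u * (1 + s)))
           else h (clamp (set_val u * (1 + s) - 1)).

Lemma real_cont_at (A : topologicalType) (sf : A -> RR) (a0 : A) (u : I01) :
  {for a0, continuous sf} ->
  {for (a0, u), continuous (fun au : A * I01 => set_val au.2 * (1 + sf au.1))}.
Proof.
move=> cs.
apply: (@cvgM RR _ _ _ (fun au : A * I01 => set_val au.2) (fun au : A * I01 => 1 + sf au.1)).
  apply: (@continuous_comp _ _ _ snd (set_val : I01 -> RR)); first exact: cvg_snd.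
  exact: val_cont.
apply: (@cvgD RR RR^o _ _ _ (fun _ => 1) (fun au : A * I01 => sf au.1)); first exact: cvg_cst.
apply: (@continuous_comp _ _ _ fst sf); first exact: cvg_fst.
exact: cs.
Qed.

Lemma lift_cont_at (A : topologicalType) (wf hf : A -> I01 -> X) (sf : A -> RR)
    (a0 : A) :
  (forall v, {for (a0, v), continuous (fun av : A * I01 => wf av.1 av.2)}) ->
  (forall v, {for (a0, v), continuous (fun av : A * I01 => hf av.1 av.2)}) ->
  {for a0, continuous sf} ->
  wf a0 i1 = hf a0 i0 ->
  forall u, {for (a0, u),
    continuous (fun au : A * I01 => lift_raw (wf au.1) (hf au.1) (sf au.1) au.2)}.
Proof.
move=> cw ch cs e u.
have cc := @real_cont_at A sf a0 u cs.
have cp1 : {for (a0, u), continuous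
    (fun au : A * I01 => (au.1, clamp (set_val au.2 * (1 + sf au.1))))}.
  apply: (pair_cont_at (f := fun au : A * I01 => au.1)); first exact: fst_cont_at.
  apply: (@continuous_comp _ _ _ (fun au : A * I01 => set_val au.2 * (1 + sf au.1)) clamp) => //; exact: clamp_cont.
have cp2 : {for (a0, u), continuous
    (fun au : A * I01 => (au.1, clamp (set_val au.2 * (1 + sf au.1) - 1)))}.
  apply: (pair_cont_at (f := fun au : A * I01 => au.1)); first exact: fst_cont_at.
  apply: (@continuous_comp _ _ _ (fun au : A * I01 => set_val au.2 * (1 + sf au.1) - 1) clamp); last exact: clamp_cont.
  apply: (@cvgD RR RR^o _ _ _ (fun au : A * I01 => set_val au.2 * (1 + sf au.1)) (fun _ => -1)) => //; exact: cvg_cst.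
apply: paste_at => //.
- exact: (continuous_comp cp1 (cw _)).
- exact: (continuous_comp cp2 (ch _)).
- by move=> /= ->; rewrite subrr clamp1 clamp0.
Qed.
End PathLift.


Lemma cont_near_eq (A B : topologicalType) (f g : A -> B) (a : A) :
  {for a, continuous g} -> (\forall x \near a, f x = g x) -> {for a, continuous f}.
Proof.
move=> cg e N Nn.
have fa : f a = g a := nbhs_singleton e.
rewrite fa in Nn.
change (\forall x \near a, N (f x)).
have cgN : \forall x \near a, N (g x) := cg _ Nn.
near=> x; rewrite (near e x) //; exact: (near cgN x).
Unshelve. all: by end_near.
Qed.

Lemma set_valP' {T : Type} (A : set T) (x : set_type A) : A (set_val x).
Proof. case: x => y yin; exact: (set_mem yin). Qed.

Section Ganea.
Context (X : topologicalType) (x0 : X) (n : nat).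

Lemma cst_path_in : path_set x0 ((fun _ => x0) : {compact-open, I01 -> X}).
Proof. by split => //; exact: cst_continuous. Qed.

Definition cpath : G0 x0 :=
  @exist _ (fun g => g \in path_set x0) _ (mem_set cst_path_in).

Definition pack (g : I01 -> X) : G0 x0 :=
  match pselect (path_set x0 (g : {compact-open, I01 -> X})) with
  | left p => @exist _ (fun g => g \in path_set x0) _ (mem_set p)
  | right _ => cpath end.

Lemma pack_val (g : I01 -> X) : path_set x0 (g : {compact-open, I01 -> X}) ->
  set_val (pack g) = g.
Proof. by rewrite /pack; case: pselect. Qed.

Lemma G0_cont (w : G0 x0) : continuous (set_val w : I01 -> X).
Proof. by have [] := set_valP' w. Qed.

Lemma G0_start (w : G0 x0) : (set_val w : I01 -> X) i0 = x0.
Proof. by have [] := set_valP' w. Qed.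

Lemma ganea_mem (z : Ganea n x0) : fjoin_set (@p0 X x0) (set_val z).
Proof. exact: set_valP' z. Qed.

Lemma ganea_proj_pt (z : Ganea n x0) l w :
  jpoint (set_val z) l = Some w -> ganea_proj z = p0 w.
Proof.
move=> hw; rewrite /ganea_proj.
have [_ _ _ fib] := ganea_mem z.
case: xgetP => [y -> [l' [w' [hw' <-]]]|nP].
  exact: fib hw' hw.
by exfalso; apply: (nP (p0 w)); exists l, w.
Qed.

Lemma ganea_some (z : Ganea n x0) : exists l w, jpoint (set_val z) l = Some w.
Proof.
have [c0 s1 zn _] := ganea_mem z.
apply: contrapT => hn.
have h0 : forall l, jcoord (set_val z) l = 0.
  move=> l; apply/(zn l).2; case E: (jpoint (set_val z) l) => [w|] //.
  by exfalso; apply: hn; exists l, w.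
move: s1; rewrite big1; last by move=> l _; exact: h0.
by move=> /eqP; rewrite eq_sym oner_eq0.
Qed.

Lemma ganea_proj_cont : continuous (@ganea_proj n X x0).
Proof.
move=> z0; have [l [w0 h0]] := ganea_some z0.
move=> N; rewrite (ganea_proj_pt h0) nbhsE => -[O [oO Ow] ON].
pose V : set (G0 x0) :=
  set_val @^-1` [set g : {compact-open, I01 -> X} | g @` [set i1] `<=` O].
have oV : open V.
  apply: open_preval; apply: compact_open_open => //; exact: compact_set1.
have Vw : V w0 by move=> _ [_ -> <-]; exact: Ow.
have nb : nbhs z0 (set_val @^-1` join_subbase (Some (l, inr V))).
  apply: (@val_cont _ (ganea_set n x0) z0); apply: open_nbhs_nbhs; split.
    exact: (@join_open_sub n (G0 x0) (Some (l, inr V))).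
  by exists w0; split.
apply: filterS nb => z [x [hx Vx]] /=; apply: ON.
by rewrite (ganea_proj_pt hx); apply: Vx; exists i1.
Qed.

End Ganea.


Lemma lift_path_cont (X : topologicalType) (w h : I01 -> X) (s : RR) :
  continuous w -> continuous h -> w i1 = h i0 -> continuous (lift_raw w h s).
Proof.
move=> cw ch e u.
have key := @lift_cont_at X I01 (fun _ => w) (fun _ => h) (fun _ => s) u.
have c1 : {for u, continuous (fun v : I01 => (u, v))}.
  apply: (pair_cont_at (f := fun _ => u)); [exact: (@cst_continuous I01 I01 u u) | by []].
have H1 : forall v : I01, {for (u, v), continuous (fun av : I01 * I01 => w av.2)}.
  move=> v; apply: (continuous_comp (f := snd) (g := w)); [exact: snd_cont_at | exact: cw].
have H2 : forall v : I01, {for (u, v), continuous (fun av : I01 * I01 => h av.2)}.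
  move=> v; apply: (continuous_comp (f := snd) (g := h)); [exact: snd_cont_at | exact: ch].
have H3 : {for u, continuous (fun _ : I01 => s)} := @cst_continuous I01 RR s u.
have k2 := key H1 H2 H3 e u.
exact: (@continuous_comp _ _ _ (fun v => (u, v))
  (fun au : I01 * I01 => lift_raw w h s au.2) u c1 k2).
Qed.

Lemma lift_at0 (X : topologicalType) (w h : I01 -> X) s : lift_raw w h s i0 = w i0.
Proof.
have -> : lift_raw w h s i0 = if 0 * (1 + s) <= 1 then w (clamp (0 * (1 + s))) else h (clamp (0 * (1 + s) - 1)) by [].
by rewrite mul0r ler01 clamp0.
Qed.

Lemma lift_at1 (X : topologicalType) (w h : I01 -> X) (s : I01) :
  w i1 = h i0 -> lift_raw w h (set_val s) i1 = h s.
Proof.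
move=> e.
have -> : lift_raw w h (set_val s) i1 = if 1 * (1 + set_val s) <= 1 then w (clamp (1 * (1 + set_val s))) else h (clamp (1 * (1 + set_val s) - 1)) by [].
rewrite mul1r.
have /andP [s0 s1] := I01_bounds s.
case: ifP => hs.
- have s0' : set_val s = 0 by lra.
  have -> : s = i0 by apply: set_type_eq.
  by rewrite addr0 clamp1 e.
- by rewrite [1 + _]addrC addrK clamp_val.
Qed.

Lemma lift_s0 (X : topologicalType) (w h : I01 -> X) : lift_raw w h 0 = w.
Proof.
apply: funext => u; rewrite /lift_raw addr0 mulr1.
have /andP [_ u1] := I01_bounds u.
by rewrite u1 clamp_val.
Qed.

Lemma cont_pre (A B : topologicalType) (g : A -> B) (x : A) (P : set B) :
  {for x, continuous g} -> nbhs (g x) P -> nbhs x (g @^-1` P).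
Proof. by move=> c /c. Qed.

Section JoinLift.
Context (X : topologicalType) (x0 : X) (n : nat).
Context (K : topologicalType) (H : K * I01 -> X) (f : K -> Ganea n x0).
Hypotheses (cH : continuous H) (cf : continuous f)
  (hf : forall k, ganea_proj (f k) = H (k, i0)).

Definition wsome (k : K) (l : 'I_n.+1) : G0 x0 :=
  if jpoint (set_val (f k)) l is Some w then w else cpath x0.
Definition wl k l : I01 -> X := set_val (wsome k l).
Definition hk k : I01 -> X := fun t => H (k, t).
Definition Lam (k : K) (s : I01) l : G0 x0 :=
  pack x0 (lift_raw (wl k l) (hk k) (set_val s)).

Lemma wl_some k l w : jpoint (set_val (f k)) l = Some w -> wl k l = set_val w.
Proof. by rewrite /wl /wsome => ->. Qed.

Lemma hk_cont k : continuous (hk k).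
Proof.
move=> t.
have c1 : {for t, continuous (fun v : I01 => (k, v))}.
  apply: (pair_cont_at (f := fun _ => k)); [exact: (@cst_continuous I01 K k t) | by []].
have T1 := (@continuous_comp _ _ _ (fun v : I01 => (k, v)) H t c1).
apply: T1; exact: cH.
Qed.

Lemma junction k l w : jpoint (set_val (f k)) l = Some w -> wl k l i1 = hk k i0.
Proof. by move=> hw; rewrite (wl_some hw) /hk -hf (ganea_proj_pt hw). Qed.

Lemma Lam_path k (s : I01) l w : jpoint (set_val (f k)) l = Some w ->
  path_set x0 (lift_raw (wl k l) (hk k) (set_val s) : {compact-open, I01 -> X}).
Proof.
move=> hw; split.
- apply: lift_path_cont; [|exact: hk_cont|exact: junction hw].
  rewrite (wl_some hw); exact: G0_cont.
- by rewrite lift_at0 (wl_some hw) G0_start.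
Qed.

Lemma Lam_val k (s : I01) l w : jpoint (set_val (f k)) l = Some w ->
  set_val (Lam k s l) = lift_raw (wl k l) (hk k) (set_val s).
Proof. by move=> hw; apply: pack_val; exact: Lam_path hw. Qed.

Lemma Lam_p0 k (s : I01) l w : jpoint (set_val (f k)) l = Some w -> p0 (Lam k s l) = H (k, s).
Proof.
move=> hw; rewrite /p0 (Lam_val s hw) lift_at1 //; exact: junction hw.
Qed.

Definition Gc (ks : K * I01) : join_carrier n (G0 x0) :=
  JoinPt (jcoord (set_val (f ks.1)))
    (fun l => if jpoint (set_val (f ks.1)) l is Some _ then Some (Lam ks.1 ks.2 l)
              else None).

Lemma Gc_in ks : ganea_set n x0 (Gc ks).
Proof.
case: ks => k s; have [c0 s1 zn fib] := ganea_mem (f k).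
split => //=.
- move=> l; split.
    by move=> /(zn l).1 ->.
  move=> h; apply/(zn l).2; move: h.
  by case: (jpoint (set_val (f k)) l).
- move=> l l' x x'.
  case E: (jpoint (set_val (f k)) l) => [w|] // [<-].
  case E': (jpoint (set_val (f k)) l') => [w'|] // [<-].
  by rewrite (Lam_p0 s E) (Lam_p0 s E').
Qed.

Definition Gj (ks : K * I01) : Ganea n x0 :=
  @exist _ (fun z => z \in ganea_set n x0) (Gc ks) (mem_set (Gc_in ks)).

Lemma Gj_proj ks : ganea_proj (Gj ks) = H ks.
Proof.
case: ks => k s; have [l [w hw]] := ganea_some (f k).
rewrite (@ganea_proj_pt _ _ _ (Gj (k, s)) l (Lam k s l)) /=; last by rewrite hw.
exact: Lam_p0 hw.
Qed.

Lemma Gj0 k : Gj (k, i0) = f k.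
Proof.
apply: set_type_eq.
have -> : set_val (Gj (k, i0)) = JoinPt (jcoord (set_val (f k)))
   (fun l => if jpoint (set_val (f k)) l is Some _ then Some (Lam k i0 l) else None)
  by [].
have hh : forall l w, jpoint (set_val (f k)) l = Some w -> Lam k i0 l = w.
  move=> l w hw; apply: set_type_eq; rewrite (Lam_val i0 hw) (wl_some hw).
  have -> : set_val i0 = 0 by [].
  exact: lift_s0.
move: hh; case: (set_val (f k)) => c p /= hh.
have -> : (fun l => if p l is Some _ then Some (Lam k i0 l) else None) = p.
  apply: funext => l.
  by case Ep: (p l) => [w|] //=; rewrite (hh l w Ep).
by [].
Qed.

Lemma cont_val_f : continuous (fun k => set_val (f k)).
Proof.
move=> k; apply: (continuous_comp (f := f) (g := set_val)); first exact: cf.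
exact: (@val_cont _ (ganea_set n x0)).
Qed.

Lemma wsome_cont k0 l w0 : jpoint (set_val (f k0)) l = Some w0 ->
  {for k0, continuous (fun k => wsome k l)}.
Proof.
move=> h0 N Nn.
have : nbhs w0 N by move: Nn; rewrite /wsome h0.
rewrite nbhsE => -[V [oV Vw] VN].
have nb : nbhs (set_val (f k0)) (join_subbase (Some (l, inr V))).
  apply: open_nbhs_nbhs; split; first exact: (@join_open_sub n (G0 x0) (Some (l, inr V))).
  by exists w0.
have h := cont_pre (@cont_val_f k0) nb.
change (nbhs k0 ((fun k => wsome k l) @^-1` N)).
apply: (filterS _ h) => k /= [x [hx Vx]]; rewrite /wsome hx; exact: VN.
Qed.

Lemma wl_cont_at k0 l w0 (v : I01) : jpoint (set_val (f k0)) l = Some w0 ->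
  {for (k0, v), continuous (fun kv : K * I01 => wl kv.1 l kv.2)}.
Proof.
move=> h0.
apply: (@eval_at K X (fun k => set_val (wsome k l)) k0 v).
- apply: (continuous_comp (f := fun k => wsome k l) (g := set_val)).
    exact: wsome_cont h0.
  exact: (@val_cont _ (path_set x0)).
- rewrite /wsome h0; exact: G0_cont.
Qed.

Lemma Lam_cont k0 (s0 : I01) l w0 : jpoint (set_val (f k0)) l = Some w0 ->
  {for (k0, s0), continuous (fun ks : K * I01 => Lam ks.1 ks.2 l)}.
Proof.
move=> h0; apply: set_type_cvg_at.
pose phi := (fun ks : K * I01 =>
  (lift_raw (wl ks.1 l) (hk ks.1) (set_val ks.2) : {compact-open, I01 -> X})).
have cphi : {for (k0, s0), continuous phi}.
  suff cc : forall u, {for ((k0, s0), u), continuous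
      (fun p : K * I01 * I01 => lift_raw (wl p.1.1 l) (hk p.1.1) (set_val p.1.2) p.2)}.
    have Hc := curry_at cc.
    exact: Hc.
  move=> u.
  have m1 : forall v : I01, {for ((k0, s0), v),
      continuous (fun av : K * I01 * I01 => (av.1.1, av.2))}.
    move=> v; apply: (pair_cont_at (f := fun av : K * I01 * I01 => av.1.1)).
      apply: (continuous_comp (f := fst) (g := fst)); exact: fst_cont_at.
    exact: snd_cont_at.
  have H1 : forall v : I01, {for ((k0, s0), v),
      continuous (fun av : K * I01 * I01 => wl av.1.1 l av.2)}.
    move=> v; exact: (continuous_comp (m1 v) (@wl_cont_at k0 l w0 v h0)).
  have H2 : forall v : I01, {for ((k0, s0), v),
      continuous (fun av : K * I01 * I01 => hk av.1.1 av.2)}.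
    move=> v; exact: (continuous_comp (m1 v) (@cH (k0, v))).
  have H3 : {for (k0, s0), continuous (fun a : K * I01 => set_val a.2)}.
    apply: (continuous_comp (f := snd) (g := set_val)); first exact: snd_cont_at.
    exact: (@val_cont _ unit_itv).
  have H4 := junction h0.
  exact: (@lift_cont_at X (K * I01)%type (fun a => wl a.1 l) (fun a => hk a.1)
     (fun a => set_val a.2) (k0, s0) H1 H2 H3 H4 u).
apply: (cont_near_eq cphi).
have nb : nbhs (set_val (f k0)) (join_subbase (Some (l, inr setT))).
  apply: open_nbhs_nbhs; split.
    exact: (@join_open_sub n (G0 x0) (Some (l, inr setT)) openT).
  by exists w0.
have nk := cont_pre (@cont_val_f k0) nb.
have h := cont_pre (@fst_cont_at K I01 (k0, s0)) nk.
apply: (filterS _ h) => -[k s] /= [x [hx _]].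
by rewrite (Lam_val s hx).
Qed.

Lemma Gj_cont : continuous Gj.
Proof.
move=> [k0 s0]; apply: set_type_cvg_at.
apply: join_cvg => -[[l [U|V]]|] /= Di bi.
- have nb : nbhs (set_val (f k0)) (join_subbase (Some (l, inl U))).
    apply: open_nbhs_nbhs; split; last exact: bi.
    exact: (@join_open_sub n (G0 x0) (Some (l, inl U)) Di).
  exact: (cont_pre (@fst_cont_at K I01 (k0, s0)) (cont_pre (@cont_val_f k0) nb)).
- move: bi; case E: (jpoint (set_val (f k0)) l) => [w0|] /=; last by case=> ? [].
  case=> _ [[<-] VL].
  have n1 := @Lam_cont k0 s0 l w0 E V (open_nbhs_nbhs (conj Di VL)).
  have nb : nbhs (set_val (f k0)) (join_subbase (Some (l, inr setT))).
    apply: open_nbhs_nbhs; split.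
      exact: (@join_open_sub n (G0 x0) (Some (l, inr setT)) openT).
    by exists w0.
  have n2 := cont_pre (@fst_cont_at K I01 (k0, s0)) (cont_pre (@cont_val_f k0) nb).
  near=> ks.
  have [x [hx _]] : exists x, jpoint (set_val (f ks.1)) l = Some x /\ setT x.
    by near: ks.
  have VL' : V (Lam ks.1 ks.2 l) by near: ks.
  exists (Lam ks.1 ks.2 l); split => //.
  by rewrite /= /Gc /= hx.
- exact: filterT.
Unshelve. all: by end_near.
Qed.

End JoinLift.


Unset Implicit Arguments.

Theorem mainTheorem7 (X Y : topologicalType) (x0 : X) (y0 : Y) (k : nat) :
  is_CW_complex X -> is_CW_complex Y ->
  path_connected_space X -> path_connected_space Y ->
  serre_fibration (@ganea_hat_proj k X Y x0 y0).
Proof.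
move=> _ _ _ _; split.
  move=> ab.
  have cv : {for ab, continuous (fun ab : ganea_hat k x0 y0 => set_val ab)}.
    exact: (@val_cont _ (ganea_hat_set k x0 y0) ab).
  apply: (pair_cont_at (f := fun ab : ganea_hat k x0 y0 => ganea_proj (set_val ab).1)
                       (g := fun ab : ganea_hat k x0 y0 => ganea_proj (set_val ab).2)).
    apply: (continuous_comp (f := fun ab : ganea_hat k x0 y0 => (set_val ab).1)
                            (g := @ganea_proj k X x0)).
      exact: (continuous_comp cv (@fst_cont_at (Ganea k x0) (Ganea k y0) (set_val ab))).
    exact: (@ganea_proj_cont X x0 k).
  apply: (continuous_comp (f := fun ab : ganea_hat k x0 y0 => (set_val ab).2)
                          (g := @ganea_proj k Y y0)).
    exact: (continuous_comp cv (@snd_cont_at (Ganea k x0) (Ganea k y0) (set_val ab))).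
  exact: (@ganea_proj_cont Y y0 k).
move=> K _ H f cH cf hf.
pose H1 := fun z => (H z).1.
pose H2 := fun z => (H z).2.
pose f1 := fun k0 => (set_val (f k0)).1.
pose f2 := fun k0 => (set_val (f k0)).2.
have cH1 : continuous H1 by move=> z; exact: (continuous_comp (cH z) (@fst_cont_at X Y (H z))).
have cH2 : continuous H2 by move=> z; exact: (continuous_comp (cH z) (@snd_cont_at X Y (H z))).
have cv : forall k0, {for k0, continuous (fun k0 => set_val (f k0))}.
  move=> k0; exact: (continuous_comp (cf k0) (@val_cont _ (ganea_hat_set k x0 y0) (f k0))).
have cf1 : continuous f1 by move=> z; exact: (continuous_comp (cv z) (@fst_cont_at (Ganea k x0) (Ganea k y0) (set_val (f z)))).
have cf2 : continuous f2 by move=> z; exact: (continuous_comp (cv z) (@snd_cont_at (Ganea k x0) (Ganea k y0) (set_val (f z)))).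
have hf1 : forall k0, ganea_proj (f1 k0) = H1 (k0, i0).
  by move=> k0; rewrite /H1 -hf.
have hf2 : forall k0, ganea_proj (f2 k0) = H2 (k0, i0).
  by move=> k0; rewrite /H2 -hf.
pose G1 := Gj cH1 hf1.
pose G2 := Gj cH2 hf2.
have Gin : forall z, ganea_hat_set k x0 y0 (G1 z, G2 z).
  move=> [k0 s]; have [i [j [ij l1 l2]]] := set_valP' (f k0).
  by exists i, j; split.
pose G := fun z => @exist _ (fun ab => ab \in ganea_hat_set k x0 y0) (G1 z, G2 z)
   (mem_set (Gin z)).
exists G; split.
- move=> z; apply: set_type_cvg_at.
  apply: (pair_cont_at (f := G1) (g := G2)).
    exact: (@Gj_cont _ _ _ _ _ _ cH1 cf1 hf1 z).
  exact: (@Gj_cont _ _ _ _ _ _ cH2 cf2 hf2 z).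
- move=> z; rewrite /ganea_hat_proj /= /G1 /G2 !Gj_proj /H1 /H2.
  by case: (H z).
- move=> k0; apply: set_type_eq.
  have -> : set_val (G (k0, i0)) = (G1 (k0, i0), G2 (k0, i0)) by [].
  rewrite /G1 /G2 (Gj0 cH1 hf1) (Gj0 cH2 hf2) /f1 /f2.
  by case: (set_val (f k0)).
Qed.
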